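(* Let $\mathsf{P}>0$, $A_{\mathsf{u},k}>0$, $\sigma_k^2>0$, $\mathsf{g}_k>0$ for $k\in\{1,2\}$, $k_0,\eta>0$, $\rho\in\mathbb{C}$ with $|\rho|<1$, $\overline{\rho}=1-|\rho|^2$. Let $\widetilde{\gamma}_{\mathsf{dl},k}(x)=\frac{A_{\mathsf{u},k}k_0^2\eta^2}{4\pi\sigma_k^2}x$ and $$\mathsf{C}_{\mathsf{dl}}=\max_{\mathsf{P}_1,\mathsf{P}_2\ge0,\ \mathsf{P}_1+\mathsf{P}_2\le\mathsf{P}}\log_2\big(1+\widetilde{\gamma}_{\mathsf{dl},1}(\mathsf{P}_1)\mathsf{g}_1+\widetilde{\gamma}_{\mathsf{dl},2}(\mathsf{P}_2)\mathsf{g}_2+\widetilde{\gamma}_{\mathsf{dl},1}(\mathsf{P}_1)\widetilde{\gamma}_{\mathsf{dl},2}(\mathsf{P}_2)\mathsf{g}_1\mathsf{g}_2\overline{\rho}\big).$$ Let $\xi=\dfrac{A_{\mathsf{u},1}\mathsf{g}_1/\sigma_1^2-A_{\mathsf{u},2}\mathsf{g}_2/\sigma_2^2}{A_{\mathsf{u},1}A_{\mathsf{u},2}k_0^2\eta^2\mathsf{g}_1\mathsf{g}_2\overline{\rho}/(4\pi\sigma_1^2\sigma_2^2)}$, $\varepsilon_1=\widetilde{\gamma}_{\mathsf{dl},1}\big(\tfrac{\mathsf{P}+\xi}{2}\big)\mathsf{g}_1$ and $\varepsilon_2=\widetilde{\gamma}_{\mathsf{dl},2}\big(\tfrac{\mathsf{P}-\xi}{2}\big)\mathsf{g}_2$.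 Then $$\mathsf{C}_{\mathsf{dl}}=\begin{cases}\log_2(1+\widetilde{\gamma}_{\mathsf{dl},1}(\mathsf{P})\mathsf{g}_1)&\xi\ge\mathsf{P},\\\log_2(1+\widetilde{\gamma}_{\mathsf{dl},2}(\mathsf{P})\mathsf{g}_2)&\xi\le-\mathsf{P},\\\log_2(1+\varepsilon_1+\varepsilon_2+\varepsilon_1\varepsilon_2\overline{\rho})&\text{otherwise}.\end{cases}$$
   Context: In the paper, the maximum defining $\mathsf{C}_{\mathsf{dl}}$ is the sum-rate capacity of the dual uplink channel, which by uplink–downlink duality equals the sum-rate capacity of the two-user downlink channel from a continuous-aperture array $\mathcal{A}$; here $\mathsf{g}_k=\int_{\mathcal{A}}|\mathsf{G}_k|^2$ are the users' channel gains and $\rho=\int_{\mathcal{A}}\mathsf{G}_1^*\mathsf{G}_2/\sqrt{\mathsf{g}_1\mathsf{g}_2}$ their channel correlation factor. *)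

(* Defs.v *)
From Stdlib Require Import Reals.
From Coquelicot Require Import Coquelicot.
Open Scope R_scope.

Definition log2 (x : R) : R := ln x / ln 2.

(* gamma~_{dl,k}(x) = A_{u,k} k0^2 eta^2 / (4 pi sigma_k^2) * x ; s2 stands for sigma_k^2 *)
Definition gamma_dl (Au k0 eta s2 x : R) : R :=
  Au * k0 ^ 2 * eta ^ 2 / (4 * PI * s2) * x.

Definition is_max_value {T : Type} (S : T -> Prop) (f : T -> R) (v : R) : Prop :=
  (exists p, S p /\ f p = v) /\ (forall p, S p -> f p <= v).

(* Main.v *)
Require Import Defs.
From Stdlib Require Import Reals.
From Coquelicot Require Import Coquelicot.
From Stdlib Require Import Lra Psatz.
Open Scope R_scope.
Lemma key (a b r P xi t u : R) : 0<a -> 0<b -> 0<r -> 0<P -> xi*(a*b*r) = a-b -> 0<=t -> 0<=u -> t+u<=P ->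
 (P <= xi -> 1 + a*t + b*u + a*t*(b*u)*r <= 1 + a*P) /\
 (xi <= -P -> 1 + a*t + b*u + a*t*(b*u)*r <= 1 + b*P) /\
 (1 + a*t + b*u + a*t*(b*u)*r <= 1 + a*((P+xi)/2) + b*((P-xi)/2) + a*((P+xi)/2)*(b*((P-xi)/2))*r).
Proof.
intros Ha Hb Hr HP Hxi Ht Hu Htu.
assert (Hab : 0 < a*b*r) by (apply Rmult_lt_0_compat; [apply Rmult_lt_0_compat|]; lra).
assert (S1 : 1 + a*t + b*u + a*t*(b*u)*r <= 1 + a*t + b*(P-t) + a*b*r*t*(P-t)).
{ assert (0 <= (P-t-u)*(b + a*b*r*t)).
  { apply Rmult_le_pos; [lra|]. assert (0 <= a*b*r*t) by (apply Rmult_le_pos; lra). lra. }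
  nra. }
assert (E : a - b = a*b*r*xi) by (rewrite <- Hxi; ring).
split; [|split].
- intro H. assert (0 <= (P-t)*(a*b*r*(xi-t))).
  { apply Rmult_le_pos; [lra|]. apply Rmult_le_pos; lra. }
  assert (1 + a*t + b*(P-t) + a*b*r*t*(P-t) = 1 + a*P - (P-t)*(a-b) + a*b*r*t*(P-t)) by ring.
  rewrite E in H1. lra.
- intro H. assert (0 <= t*(a*b*r*(t - xi - P))).
  { apply Rmult_le_pos; [lra|]. apply Rmult_le_pos; lra. }
  assert (1 + a*t + b*(P-t) + a*b*r*t*(P-t) = 1 + b*P + t*(a-b) + a*b*r*t*(P-t)) by ring.
  rewrite E in H1. lra.
- assert (0 <= a*b*r*((t - (P+xi)/2)*(t - (P+xi)/2))).
  { apply Rmult_le_pos; [lra|]. apply Rle_0_sqr. }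
  assert (1 + a*t + b*(P-t) + a*b*r*t*(P-t) = 1 + b*P + t*(a-b) + a*b*r*t*(P-t)) by ring.
  assert (1 + a*((P+xi)/2) + b*((P-xi)/2) + a*((P+xi)/2)*(b*((P-xi)/2))*r
          = 1 + b*P + (P+xi)/2*(a-b) + a*b*r*((P+xi)/2)*((P-xi)/2)) by field.
  rewrite E in H0, H1.
  assert (1 + b*P + t*(a*b*r*xi) + a*b*r*t*(P-t) + a*b*r*((t - (P+xi)/2)*(t - (P+xi)/2))
     = 1 + b*P + (P+xi)/2*(a*b*r*xi) + a*b*r*((P+xi)/2)*((P-xi)/2)) by field.
  lra.
Qed.

Lemma log2_le x y : 0 < x -> x <= y -> log2 x <= log2 y.
Proof.
intros. unfold log2, Rdiv. apply Rmult_le_compat_r.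
- left. apply Rinv_0_lt_compat. rewrite <- ln_1. apply ln_increasing; lra.
- destruct H0. left; apply ln_increasing; lra. subst; lra.
Qed.

Theorem theorem5 (P Au1 Au2 s1 s2 g1 g2 k0 eta : R) (rho : C) :
  0 < P -> 0 < Au1 -> 0 < Au2 -> 0 < s1 -> 0 < s2 -> 0 < g1 -> 0 < g2 ->
  0 < k0 -> 0 < eta -> Cmod rho < 1 ->
  let rhob := 1 - Cmod rho ^ 2 in
  let gt1 := gamma_dl Au1 k0 eta s1 in
  let gt2 := gamma_dl Au2 k0 eta s2 in
  let feasible := fun p : R * R => 0 <= fst p /\ 0 <= snd p /\ fst p + snd p <= P in
  let obj := fun p : R * R =>
    log2 (1 + gt1 (fst p) * g1 + gt2 (snd p) * g2
            + gt1 (fst p) * gt2 (snd p) * g1 * g2 * rhob) in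
  let xi := (Au1 * g1 / s1 - Au2 * g2 / s2)
            / (Au1 * Au2 * k0 ^ 2 * eta ^ 2 * g1 * g2 * rhob / (4 * PI * s1 * s2)) in
  let eps1 := gt1 ((P + xi) / 2) * g1 in
  let eps2 := gt2 ((P - xi) / 2) * g2 in
  is_max_value feasible obj
    (if Rle_dec P xi then log2 (1 + gt1 P * g1)
     else if Rle_dec xi (- P) then log2 (1 + gt2 P * g2)
     else log2 (1 + eps1 + eps2 + eps1 * eps2 * rhob)).
Proof.
intros HP HA1 HA2 Hs1 Hs2 Hg1 Hg2 Hk He Hrho rhob gt1 gt2 feasible obj xi eps1 eps2.
set (c1 := Au1 * k0 ^ 2 * eta ^ 2 / (4 * PI * s1)).
set (c2 := Au2 * k0 ^ 2 * eta ^ 2 / (4 * PI * s2)).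
assert (G1 : forall x, gt1 x = c1 * x) by reflexivity.
assert (G2 : forall x, gt2 x = c2 * x) by reflexivity.
assert (Hpi := PI_RGT_0).
assert (Hc1 : 0 < c1).
{ unfold c1. apply Rdiv_lt_0_compat; [|nra].
  apply Rmult_lt_0_compat; [apply Rmult_lt_0_compat|]; try apply pow_lt; lra. }
assert (Hc2 : 0 < c2).
{ unfold c2. apply Rdiv_lt_0_compat; [|nra].
  apply Rmult_lt_0_compat; [apply Rmult_lt_0_compat|]; try apply pow_lt; lra. }
assert (Hr : 0 < rhob).
{ unfold rhob. assert (0 <= Cmod rho) by apply Cmod_ge_0. nra. }
assert (Ha : 0 < c1*g1) by nra.
assert (Hb : 0 < c2*g2) by nra.
assert (Hxi : xi * (c1*g1 * (c2*g2) * rhob) = c1*g1 - c2*g2).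
{ assert (0 < k0^2) by (apply pow_lt; lra).
  assert (0 < eta^2) by (apply pow_lt; lra).
  assert (0 < Au1 * Au2 * k0 ^ 2 * eta ^ 2 * g1 * g2 * rhob).
  { repeat apply Rmult_lt_0_compat; lra. }
  unfold xi, c1, c2. field. repeat split; lra. }
assert (OBJ : forall p, obj p = log2 (1 + c1*g1*fst p + c2*g2*snd p + c1*g1*fst p*(c2*g2*snd p)*rhob)).
{ intro p. unfold obj. rewrite G1, G2. f_equal. ring. }
assert (K := fun t u => key (c1*g1) (c2*g2) rhob P xi t u Ha Hb Hr HP Hxi).
assert (POS : forall t u, 0 <= t -> 0 <= u -> 0 < 1 + c1*g1*t + c2*g2*u + c1*g1*t*(c2*g2*u)*rhob).
{ intros t u Ht Hu.
  assert (0 <= c1*g1*t) by (apply Rmult_le_pos; lra).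
  assert (0 <= c2*g2*u) by (apply Rmult_le_pos; lra).
  assert (0 <= c1*g1*t*(c2*g2*u)*rhob) by (apply Rmult_le_pos; [apply Rmult_le_pos|]; lra).
  lra. }
destruct (Rle_dec P xi) as [H1|H1]; [|destruct (Rle_dec xi (-P)) as [H2|H2]].
- split.
  + exists (P, 0). split. unfold feasible; simpl; lra.
    rewrite (OBJ (P,0)). change (gt1 P) with (c1*P). simpl. apply (f_equal log2). ring.
  + intros [t u] [Ht [Hu Htu]]. simpl in *. rewrite (OBJ (t,u)). change (gt1 P) with (c1*P). simpl.
    apply log2_le. apply POS; lra.
    replace (c1*P*g1) with (c1*g1*P) by ring. apply (K t u); lra.
- split.
  + exists (0, P). split. unfold feasible; simpl; lra.
    rewrite (OBJ (0,P)). change (gt2 P) with (c2*P). simpl. apply (f_equal log2). ring.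
  + intros [t u] [Ht [Hu Htu]]. simpl in *. rewrite (OBJ (t,u)). change (gt2 P) with (c2*P). simpl.
    apply log2_le. apply POS; lra.
    replace (c2*P*g2) with (c2*g2*P) by ring. apply (K t u); lra.
- assert (Heq : 1 + eps1 + eps2 + eps1 * eps2 * rhob =
     1 + c1*g1*((P+xi)/2) + c2*g2*((P-xi)/2) + c1*g1*((P+xi)/2)*(c2*g2*((P-xi)/2))*rhob).
  { unfold eps1, eps2. rewrite G1, G2. ring. }
  rewrite Heq. split.
  + exists ((P+xi)/2, (P-xi)/2). split. unfold feasible; simpl; lra.
    rewrite OBJ. reflexivity.
  + intros [t u] [Ht [Hu Htu]]. simpl in *. rewrite (OBJ (t,u)). simpl.
    apply log2_le. apply POS; lra. apply (K t u); lra.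
Qed.
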